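(* Let $X$ and $Y$ be 2-dimensional non-positively curved piecewise Euclidean complexes and let $Z$ be a 1-dimensional complex which is a subcomplex of both $X$ and $Y$. If $Z$ is ultra-convex in $X$ (or in $Y$), then the space $X\sqcup_Z Y$ obtained by gluing $X$ and $Y$ along $Z$ is also a 2-dimensional non-positively curved complex.
   Context: A 2-dimensional piecewise Euclidean complex is non-positively curved if the link of every vertex contains no closed loop of length less than $2\pi$ (in the angular metric). For a non-positively curved piecewise Euclidean 2-complex $X$ and a 1-dimensional subcomplex $Y$, $Y$ is ultra-convex in $X$ if for every vertex $v\in Y$, any two points of $\mathrm{Lk}(v,Y)$ are at distance at least $2\pi$ in $\mathrm{Lk}(v,X)$. *)

(* Defs.v *)
From Stdlib Require Import Reals Lra List ClassicalEpsilon.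
Open Scope R_scope.
Set Implicit Arguments.

(** A 2-cell
    [f] is a convex Euclidean polygon whose boundary is the closed edge path
    [bdry f] (an edge traversed src->tgt if the flag is [true], tgt->src
    otherwise); [ang f k] is the interior angle of the polygon at the corner
    at the start of the k-th boundary edge (between sides k-1 and k). *)
Record PE2 := mkPE2 {
  vert : Type;
  edge : Type;
  face : Type;
  src : edge -> vert;
  tgt : edge -> vert;
  len : edge -> R;
  bdry : face -> list (edge * bool);
  ang : face -> nat -> R }.

Definition estart (X : PE2) (p : edge X * bool) : vert X :=
  if snd p then src X (fst p) else tgt X (fst p).
Definition eend (X : PE2) (p : edge X * bool) : vert X :=
  if snd p then tgt X (fst p) else src X (fst p).
Definition flip {E : Type} (p : E * bool) : E * bool := (fst p, negb (snd p)).

Definition rsum (n : nat) (g : nat -> R) : R :=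
  fold_right Rplus 0 (map g (seq 0 n)).

(** direction of the k-th side when side 0 points in direction 0 *)
Definition heading (X : PE2) (f : face X) (k : nat) : R :=
  rsum k (fun j => PI - ang X f (S j)).

Definition side_len (X : PE2) (f : face X) (k : nat) : R :=
  match nth_error (bdry X f) k with Some p => len X (fst p) | None => 0 end.

Definition convex_polygon_cell (X : PE2) (f : face X) : Prop :=
  let s := bdry X f in
  let n := length s in
  (3 <= n)%nat /\
  (forall k, (k < n)%nat -> 0 < ang X f k < PI) /\
  (forall k, (k < n)%nat -> exists a b, nth_error s k = Some a /\
       nth_error s ((k + 1) mod n) = Some b /\ eend X a = estart X b) /\
  rsum n (fun k => PI - ang X f k) = 2 * PI /\
  rsum n (fun k => side_len X f k * cos (heading X f k)) = 0 /\
  rsum n (fun k => side_len X f k * sin (heading X f k)) = 0.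

Definition is_PE (X : PE2) : Prop :=
  (forall e, 0 < len X e) /\ (forall f, convex_polygon_cell X f).

Definition PE_dim2 (X : PE2) : Prop := is_PE X /\ inhabited (face X).

Definition PE_dim1 (Z : PE2) : Prop :=
  is_PE Z /\ (face Z -> False) /\ inhabited (edge Z).

(** Vertices of Lk(v,X): edge-germs at v, i.e. oriented edges [p] with
    [estart p = v].  Edges of Lk(v,X): corners (f,k) of 2-cells at v; the
    corner (f,k) joins the germ of side k and the (reversed) germ of side
    k-1, and has length [ang f k] (angular metric). *)
Definition corner (X : PE2) (f : face X) (k : nat) (p q : edge X * bool) : Prop :=
  let s := bdry X f in
  let n := length s in
  (k < n)%nat /\ nth_error s k = Some p /\
  exists r, nth_error s ((k + n - 1) mod n) = Some r /\ q = flip r.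

(** [lwalk X v p r cs vs]: an edge path in Lk(v,X) from [p] to [r] through
    the link edges (corners) [cs], visiting the link vertices [vs] (the
    last vertex [r] excluded). *)
Inductive lwalk (X : PE2) (v : vert X) :
  edge X * bool -> edge X * bool -> list (face X * nat) -> list (edge X * bool) -> Prop :=
| lw_nil p : estart X p = v -> lwalk X v p p nil nil
| lw_cons p q r f k cs vs :
    estart X p = v ->
    (corner X f k p q \/ corner X f k q p) ->
    lwalk X v q r cs vs -> lwalk X v p r ((f, k) :: cs) (p :: vs).

Definition wlen (X : PE2) (cs : list (face X * nat)) : R :=
  fold_right (fun c acc => ang X (fst c) (snd c) + acc) 0 cs.

Definition npc (X : PE2) : Prop :=
  forall v p cs vs, lwalk X v p p cs vs -> cs <> nil -> NoDup cs -> NoDup vs ->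
    2 * PI <= wlen X cs.

Definition subcomplex (Z X : PE2) (iV : vert Z -> vert X) (iE : edge Z -> edge X) : Prop :=
  (forall a b, iV a = iV b -> a = b) /\
  (forall a b, iE a = iE b -> a = b) /\
  (forall e, src X (iE e) = iV (src Z e)) /\
  (forall e, tgt X (iE e) = iV (tgt Z e)) /\
  (forall e, len X (iE e) = len Z e).

Definition mapE (Z X : PE2) (iE : edge Z -> edge X) (p : edge Z * bool) : edge X * bool :=
  (iE (fst p), snd p).

(** Ultra-convexity of the 1-dim subcomplex [Z] in [X]: for every vertex v of
    Z, any two (distinct) points of Lk(v,Z) are at distance >= 2 pi in
    Lk(v,X), i.e. every path in Lk(v,X) joining them has length >= 2 pi. *)
Definition ultra_convex (Z X : PE2) (iV : vert Z -> vert X) (iE : edge Z -> edge X) : Prop :=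
  forall v (p q : edge Z * bool), estart Z p = v -> estart Z q = v -> p <> q ->
    forall cs vs, lwalk X (iV v) (@mapE Z X iE p) (@mapE Z X iE q) cs vs -> 2 * PI <= wlen X cs.

Section Glue.
Variables (X Y Z : PE2)
  (iXV : vert Z -> vert X) (iXE : edge Z -> edge X)
  (iYV : vert Z -> vert Y) (iYE : edge Z -> edge Y).

Definition gvert : Type := (vert X + {y : vert Y | ~ exists z, iYV z = y})%type.
Definition gedge : Type := (edge X + {e : edge Y | ~ exists z, iYE z = e})%type.

Definition gV (y : vert Y) : gvert :=
  match excluded_middle_informative (exists z, iYV z = y) with
  | left H => inl (iXV (proj1_sig (constructive_indefinite_description _ H)))
  | right H => inr (exist _ y H)
  end.

Definition gE (e : edge Y) : gedge :=
  match excluded_middle_informative (exists z, iYE z = e) with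
  | left H => inl (iXE (proj1_sig (constructive_indefinite_description _ H)))
  | right H => inr (exist _ e H)
  end.

Definition glue : PE2 := {|
  vert := gvert;
  edge := gedge;
  face := (face X + face Y)%type;
  src := fun e => match e with inl e => inl (src X e) | inr e => gV (src Y (proj1_sig e)) end;
  tgt := fun e => match e with inl e => inl (tgt X e) | inr e => gV (tgt Y (proj1_sig e)) end;
  len := fun e => match e with inl e => len X e | inr e => len Y (proj1_sig e) end;
  bdry := fun f => match f with
           | inl f => map (fun p => (inl (fst p), snd p)) (bdry X f)
           | inr f => map (fun p => (gE (fst p), snd p)) (bdry Y f) end;
  ang := fun f => match f with inl f => ang X f | inr f => ang Y f end |}.
End Glue.

(* Main.v *)
Require Import Defs.
From Stdlib Require Import Reals List Lra Permutation ClassicalEpsilon.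
Open Scope R_scope.

Lemma wlen_app (G : PE2) (a b : list (face G * nat)) : wlen G (a ++ b) = wlen G a + wlen G b.
Proof. induction a as [|c a IH]; simpl; [lra|]. rewrite IH; lra. Qed.

Lemma wlen_cons (G : PE2) c l : wlen G (c :: l) = ang G (fst c) (snd c) + wlen G l.
Proof. reflexivity. Qed.

Lemma wlen_nil (G : PE2) : wlen G nil = 0.
Proof. reflexivity. Qed.

Lemma lwalk_app (G : PE2) v a b c cs1 vs1 cs2 vs2 :
  lwalk G v a b cs1 vs1 -> lwalk G v b c cs2 vs2 -> lwalk G v a c (cs1 ++ cs2) (vs1 ++ vs2).
Proof. induction 1; simpl; intros; auto. econstructor; eauto. Qed.

Lemma lwalk_split (G : PE2) v a c cs1 : forall cs2 vs, lwalk G v a c (cs1 ++ cs2) vs ->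
  exists b vs1 vs2, vs = vs1 ++ vs2 /\ lwalk G v a b cs1 vs1 /\ lwalk G v b c cs2 vs2.
Proof.
  revert a. induction cs1 as [|c0 cs1 IH]; simpl; intros a cs2 vs H.
  - exists a, nil, vs. split; [reflexivity|]. split; auto.
    inversion H; subst; constructor; auto.
  - inversion H as [|? q ? f k ? vs' Hs Hc Hw]; subst. destruct (IH _ _ _ Hw) as (b & vs1 & vs2 & E & W1 & W2).
    exists b, (a :: vs1), vs2. subst. split; [reflexivity|]. split; auto. econstructor; eauto.
Qed.

Arguments lwalk_split {G v a c cs1 cs2 vs}.

Lemma lwalk_start (G : PE2) v a b cs vs : lwalk G v a b cs vs -> estart G a = v.
Proof. destruct 1; auto. Qed.

Lemma lwalk_end (G : PE2) v a b cs vs : lwalk G v a b cs vs -> estart G b = v.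
Proof. induction 1; auto. Qed.

Lemma lwalk_rot (G : PE2) v p A B vs : lwalk G v p p (A ++ B) vs ->
  exists q vs', lwalk G v q q (B ++ A) vs' /\ Permutation vs vs'.
Proof.
  intros H. destruct (lwalk_split H) as (b & vs1 & vs2 & E & W1 & W2).
  exists b, (vs2 ++ vs1). split. eapply lwalk_app; eauto. subst; apply Permutation_app_comm.
Qed.

Arguments lwalk_rot {G v p A B vs}.

Definition ends (G : PE2) (c : face G * nat) (g : edge G * bool) : Prop :=
  exists h, corner G (fst c) (snd c) g h \/ corner G (fst c) (snd c) h g.

Lemma walk_head (G : PE2) v a b c cs vs : lwalk G v a b (c :: cs) vs -> ends G c a.
Proof. intros H; inversion H; subst. exists q; simpl; tauto. Qed.

Lemma walk_last (G : PE2) v a b c cs vs : lwalk G v a b (cs ++ c :: nil) vs -> ends G c b.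
Proof.
  intros H. destruct (lwalk_split H) as (b0 & vs1 & vs2 & E & W1 & W2).
  inversion W2 as [|? q ? f k ? vs' Hs Hc Hw]; subst. inversion Hw; subst. exists b0; simpl; tauto.
Qed.

Lemma walk_nonneg (G : PE2) v a b cs vs : is_PE G -> lwalk G v a b cs vs -> 0 <= wlen G cs.
Proof.
  intros [_ HP]. induction 1; simpl; [lra|].
  assert (0 < ang G f k). { destruct (HP f) as (_ & Ha & _).
    destruct H0 as [[Hk _]|[Hk _]]; apply Ha in Hk; lra. }
  lra.
Qed.

Lemma first_split {A : Type} (P : A -> bool) (l : list A) :
  (exists d, In d l /\ P d = true) ->
  exists N d R, l = N ++ d :: R /\ P d = true /\ Forall (fun x => P x = false) N.
Proof.
  induction l as [|x l IH]; intros [d [Hd Pd]]; [destruct Hd|].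
  destruct (P x) eqn:Px.
  - exists nil, x, l. auto.
  - destruct Hd as [->|Hd]; [congruence|].
    destruct IH as (N & d' & R & E & P' & F); eauto.
    exists (x :: N), d', R. subst. auto.
Qed.

Lemma all_or_ex {A : Type} (P : A -> bool) (l : list A) :
  Forall (fun x => P x = true) l \/ exists x, In x l /\ P x = false.
Proof.
  induction l as [|x l IH]; auto.
  destruct (P x) eqn:Px.
  - destruct IH as [F|(y & Hy & Py)]; [left; auto|right; exists y; simpl; auto].
  - right; exists x; simpl; auto.
Qed.

Lemma mixed (G : PE2) (P : face G * nat -> bool) v p cs vs :
  lwalk G v p p cs vs -> NoDup vs ->
  (exists c, In c cs /\ P c = true) -> (exists c, In c cs /\ P c = false) ->
  exists p0 q xs rest vs1 vs2,
    wlen G cs = wlen G xs + wlen G rest /\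
    lwalk G v p0 q xs vs1 /\ lwalk G v q p0 rest vs2 /\ p0 <> q /\
    Forall (fun c => P c = true) xs /\
    exists c1 c2 c3 c4, P c1 = true /\ P c2 = false /\ P c3 = true /\ P c4 = false /\
      ends G c1 p0 /\ ends G c2 p0 /\ ends G c3 q /\ ends G c4 q.
Proof.
  intros W ND [d [Hd Pd]] [c [Hc Pc]].
  destruct (in_split _ _ Hc) as (A & T & E1).
  assert (W1 : lwalk G v p p ((A ++ c :: nil) ++ T) vs) by (rewrite <- app_assoc; simpl; subst; auto).
  destruct (lwalk_rot W1) as (p1 & vs1 & W1' & Pm1).
  set (cs1 := T ++ A ++ c :: nil) in *.
  assert (Ew1 : wlen G cs = wlen G cs1).
  { unfold cs1; subst cs. rewrite !wlen_app, !wlen_cons, wlen_nil; lra. }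
  assert (Hd1 : In d cs1).
  { unfold cs1. subst cs. apply in_app_or in Hd; rewrite !in_app_iff; simpl in *; tauto. }
  assert (ND1 : NoDup vs1) by (eapply Permutation_NoDup; eauto).
  destruct (first_split P cs1) as (N & d2 & R & E2 & Pd2 & FN); eauto.
  assert (W2 : lwalk G v p1 p1 (N ++ (d2 :: R)) vs1) by (rewrite <- E2; exact W1').
  destruct (lwalk_rot W2) as (p2 & vs2 & W2' & Pm2).
  assert (ND2 : NoDup vs2) by (eapply Permutation_NoDup; eauto).
  assert (Ew2 : wlen G cs = wlen G ((d2 :: R) ++ N)).
  { rewrite Ew1, E2, !wlen_app; lra. }
  assert (Hlast : exists L' e', (d2 :: R) ++ N = L' ++ e' :: nil /\ P e' = false).
  { destruct N as [|n N'] using rev_ind.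
    - exists (T ++ A), c. rewrite app_nil_r. simpl in E2. rewrite <- E2. unfold cs1. rewrite app_assoc. auto.
    - exists ((d2 :: R) ++ N'), n. rewrite app_assoc. split; auto.
      apply Forall_app in FN. destruct FN as [_ F]. inversion F; auto. }
  destruct Hlast as (L' & e' & EL & Pe').
  set (cs2 := (d2 :: R) ++ N) in *.
  destruct (first_split (fun x => negb (P x)) cs2) as (xs & e & S & E3 & Pe & Fxs).
  { exists e'. rewrite EL, in_app_iff; simpl; split; auto. rewrite Pe'; auto. }
  apply Bool.negb_true_iff in Pe.
  assert (Fxs' : Forall (fun x => P x = true) xs).
  { eapply Forall_impl; [|exact Fxs]. intros x Hx; simpl in Hx. apply Bool.negb_false_iff; auto. }
  destruct xs as [|x0 xs0].
  { simpl in E3. unfold cs2 in E3. simpl in E3. inversion E3; subst; congruence. }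
  assert (W3 : lwalk G v p2 p2 ((x0 :: xs0) ++ (e :: S)) vs2) by (rewrite <- E3; exact W2').
  destruct (lwalk_split W3) as (q & ws1 & ws2 & Ev & Wx & Wr).
  exists p2, q, (x0 :: xs0), (e :: S), ws1, ws2.
  split. { rewrite Ew2. fold cs2. rewrite E3, wlen_app. reflexivity. }
  split; auto. split; auto.
  split.
  { inversion Wx; subst. inversion Wr; subst. intros Heq; subst.
    simpl in ND2. apply NoDup_cons_iff in ND2. destruct ND2 as [H _]. apply H.
    rewrite in_app_iff; simpl; auto. }
  split; auto.
  destruct (exists_last (l := x0 :: xs0) ltac:(discriminate)) as (X0 & x1 & EX).
  destruct (exists_last (l := e :: S) ltac:(discriminate)) as (S0 & e0 & ES).
  assert (e0 = e').
  { rewrite ES in E3. rewrite E3, app_assoc in EL. apply app_inj_tail in EL. destruct EL; auto. }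
  subst e0.
  exists x0, e', x1, e.
  split. { inversion Fxs'; auto. }
  split; auto.
  split. { rewrite EX in Fxs'. apply Forall_app in Fxs'. destruct Fxs' as [_ F]. inversion F; auto. }
  split; auto.
  split. { eapply walk_head; eauto. }
  split. { rewrite ES in Wr. eapply walk_last; eauto. }
  split. { rewrite EX in Wx. eapply walk_last; eauto. }
  eapply walk_head; eauto.
Qed.

Lemma corner_map (G H : PE2) (h : edge G * bool -> edge H * bool) f f' k g q :
  (forall x, h (flip x) = flip (h x)) -> bdry H f' = map h (bdry G f) ->
  corner H f' k g q -> exists g' q', g = h g' /\ q = h q' /\ corner G f k g' q'.
Proof.
  intros Hf Hb (Hk & Hg & r & Hr & Hq). rewrite Hb in *. rewrite length_map in *.
  rewrite nth_error_map in Hg, Hr.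
  destruct (nth_error (bdry G f) k) as [g'|] eqn:E1; [|discriminate].
  destruct (nth_error (bdry G f) ((k + length (bdry G f) - 1) mod length (bdry G f))) as [r'|] eqn:E2; [|discriminate].
  simpl in Hg, Hr. inversion Hg; inversion Hr; subst.
  exists g', (flip r'). split; auto. split; auto. split; auto. split; auto. exists r'; auto.
Qed.

Definition mX (X Y Z : PE2) iXV iXE iYV iYE (p : edge X * bool) : edge (glue X Y Z iXV iXE iYV iYE) * bool :=
  (inl (fst p), snd p).
Definition mY (X Y Z : PE2) iXV iXE iYV iYE (p : edge Y * bool) : edge (glue X Y Z iXV iXE iYV iYE) * bool :=
  (gE X Y Z iXE iYE (fst p), snd p).
Definition isX (X Y : PE2) (c : (face X + face Y) * nat) : bool :=
  match fst c with inl _ => true | inr _ => false end.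
Definition injX (X Y : PE2) (c : face X * nat) : (face X + face Y) * nat := (inl (fst c), snd c).
Definition injY (X Y : PE2) (c : face Y * nat) : (face X + face Y) * nat := (inr (fst c), snd c).


Lemma gV_img (X Y Z : PE2) iXV iYV iYE z : subcomplex Z Y iYV iYE ->
  gV X Y Z iXV iYV (iYV z) = inl (iXV z).
Proof.
  intros (HV & _). unfold gV. destruct (excluded_middle_informative _) as [H|H].
  - destruct (constructive_indefinite_description _ H) as [z1 Hz1]; simpl. rewrite (HV _ _ Hz1). reflexivity.
  - exfalso; apply H; eauto.
Qed.

Lemma gE_img (X Y Z : PE2) iXE iYV iYE z : subcomplex Z Y iYV iYE ->
  gE X Y Z iXE iYE (iYE z) = inl (iXE z).
Proof.
  intros (_ & HE & _). unfold gE. destruct (excluded_middle_informative _) as [H|H].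
  - destruct (constructive_indefinite_description _ H) as [z1 Hz1]; simpl. rewrite (HE _ _ Hz1). reflexivity.
  - exfalso; apply H; eauto.
Qed.

Lemma gV_inj (X Y Z : PE2) iXV iXE iYV a b : subcomplex Z X iXV iXE ->
  gV X Y Z iXV iYV a = gV X Y Z iXV iYV b -> a = b.
Proof.
  intros (HV & _). unfold gV.
  destruct (excluded_middle_informative (exists z, iYV z = a)) as [H|H];
  destruct (excluded_middle_informative (exists z, iYV z = b)) as [H'|H']; intro E.
  - destruct (constructive_indefinite_description _ H) as [z1 Hz1];
    destruct (constructive_indefinite_description _ H') as [z2 Hz2]; simpl in E.
    inversion E as [E']. apply HV in E'. subst; auto.
  - discriminate.
  - discriminate.
  - inversion E; auto.
Qed.

Lemma gE_inj (X Y Z : PE2) iXV iXE iYE a b : subcomplex Z X iXV iXE ->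
  gE X Y Z iXE iYE a = gE X Y Z iXE iYE b -> a = b.
Proof.
  intros (_ & HE & _). unfold gE.
  destruct (excluded_middle_informative (exists z, iYE z = a)) as [H|H];
  destruct (excluded_middle_informative (exists z, iYE z = b)) as [H'|H']; intro E.
  - destruct (constructive_indefinite_description _ H) as [z1 Hz1];
    destruct (constructive_indefinite_description _ H') as [z2 Hz2]; simpl in E.
    inversion E as [E']. apply HE in E'. subst; auto.
  - discriminate.
  - discriminate.
  - inversion E; auto.
Qed.

Lemma gsrc (X Y Z : PE2) iXV iXE iYV iYE e : subcomplex Z X iXV iXE -> subcomplex Z Y iYV iYE ->
  src (glue X Y Z iXV iXE iYV iYE) (gE X Y Z iXE iYE e) = gV X Y Z iXV iYV (src Y e)
  /\ tgt (glue X Y Z iXV iXE iYV iYE) (gE X Y Z iXE iYE e) = gV X Y Z iXV iYV (tgt Y e)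
  /\ len (glue X Y Z iXV iXE iYV iYE) (gE X Y Z iXE iYE e) = len Y e.
Proof.
  intros HX HY. pose proof HX as (_ & _ & Hs & Ht & Hl). pose proof HY as (_ & _ & Hs' & Ht' & Hl').
  unfold gE. destruct (excluded_middle_informative _) as [H|H].
  - destruct (constructive_indefinite_description _ H) as [z1 Hz1]; simpl. subst e.
    rewrite Hs, Ht, Hs', Ht', Hl, Hl', !(gV_img _ _ _ _ _ iYE); auto.
  - simpl. auto.
Qed.

Lemma estX (X Y Z : PE2) iXV iXE iYV iYE p :
  estart (glue X Y Z iXV iXE iYV iYE) (mX X Y Z iXV iXE iYV iYE p) = inl (estart X p)
  /\ eend (glue X Y Z iXV iXE iYV iYE) (mX X Y Z iXV iXE iYV iYE p) = inl (eend X p).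
Proof. destruct p as [e []]; split; reflexivity. Qed.

Lemma estY (X Y Z : PE2) iXV iXE iYV iYE p : subcomplex Z X iXV iXE -> subcomplex Z Y iYV iYE ->
  estart (glue X Y Z iXV iXE iYV iYE) (mY X Y Z iXV iXE iYV iYE p) = gV X Y Z iXV iYV (estart Y p)
  /\ eend (glue X Y Z iXV iXE iYV iYE) (mY X Y Z iXV iXE iYV iYE p) = gV X Y Z iXV iYV (eend Y p).
Proof.
  intros HX HY. destruct (gsrc X Y Z iXV iXE iYV iYE (fst p) HX HY) as (A & B & _).
  destruct p as [e []]; unfold estart, eend, mY; simpl in *; auto.
Qed.

Lemma rsum_ext n g g' : (forall k, g k = g' k) -> rsum n g = rsum n g'.
Proof. intros E; unfold rsum; f_equal; apply map_ext; auto. Qed.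

Lemma poly_transfer (G H : PE2) (h : edge G * bool -> edge H * bool) (phi : vert G -> vert H) f f' :
  bdry H f' = map h (bdry G f) -> ang H f' = ang G f ->
  (forall x, len H (fst (h x)) = len G (fst x)) ->
  (forall x, estart H (h x) = phi (estart G x) /\ eend H (h x) = phi (eend G x)) ->
  convex_polygon_cell G f -> convex_polygon_cell H f'.
Proof.
  intros Hb Ha Hl He (H3 & Hang & Hadj & Hsum & Hc & Hs).
  assert (Hsl : forall k, side_len H f' k = side_len G f k).
  { intros k; unfold side_len; rewrite Hb, nth_error_map. destruct (nth_error (bdry G f) k); simpl; auto. }
  assert (Hh : forall k, heading H f' k = heading G f k).
  { intros k; unfold heading; rewrite Ha; reflexivity. }
  unfold convex_polygon_cell. rewrite Hb, length_map, Ha.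
  split; auto. split; auto. split.
  - intros k Hk. destruct (Hadj k Hk) as (a & b & E1 & E2 & E3).
    exists (h a), (h b). rewrite !nth_error_map, E1, E2. simpl. split; auto. split; auto.
    destruct (He a) as [_ ->]; destruct (He b) as [-> _]; rewrite E3; auto.
  - split; auto. split.
    + rewrite <- Hc. apply rsum_ext; intros k; rewrite Hsl, Hh; auto.
    + rewrite <- Hs. apply rsum_ext; intros k; rewrite Hsl, Hh; auto.
Qed.

Lemma glue_PE (X Y Z : PE2) iXV iXE iYV iYE : subcomplex Z X iXV iXE -> subcomplex Z Y iYV iYE ->
  is_PE X -> is_PE Y -> is_PE (glue X Y Z iXV iXE iYV iYE).
Proof.
  intros HX HY [LX PX] [LY PY]. split.
  - intros [e|e]; simpl; auto.
  - intros [f|f].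
    + apply (poly_transfer X _ (mX X Y Z iXV iXE iYV iYE) inl f); auto.
      intros x; apply estX.
    + apply (poly_transfer Y _ (mY X Y Z iXV iXE iYV iYE) (gV X Y Z iXV iYV) f); auto.
      * intros x; apply (gsrc X Y Z iXV iXE iYV iYE (fst x) HX HY).
      * intros x; apply estY; auto.
Qed.

Lemma mX_inj (X Y Z : PE2) iXV iXE iYV iYE a b :
  mX X Y Z iXV iXE iYV iYE a = mX X Y Z iXV iXE iYV iYE b -> a = b.
Proof. destruct a, b; unfold mX; simpl; intro E; inversion E; auto. Qed.

Lemma mY_inj (X Y Z : PE2) iXV iXE iYV iYE a b : subcomplex Z X iXV iXE ->
  mY X Y Z iXV iXE iYV iYE a = mY X Y Z iXV iXE iYV iYE b -> a = b.
Proof.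
  intros HX. destruct a, b; unfold mY; simpl; intro E; inversion E as [[E1 E2]].
  apply (gE_inj X Y Z iXV iXE iYE) in E1; auto. subst; auto.
Qed.

Lemma cornerX (X Y Z : PE2) iXV iXE iYV iYE f k g q :
  corner (glue X Y Z iXV iXE iYV iYE) (inl f) k g q ->
  exists g' q', g = mX X Y Z iXV iXE iYV iYE g' /\ q = mX X Y Z iXV iXE iYV iYE q' /\ corner X f k g' q'.
Proof.
  apply (corner_map X _ (mX X Y Z iXV iXE iYV iYE)); [intros [e b]; reflexivity | reflexivity].
Qed.

Lemma cornerY (X Y Z : PE2) iXV iXE iYV iYE f k g q :
  corner (glue X Y Z iXV iXE iYV iYE) (inr f) k g q ->
  exists g' q', g = mY X Y Z iXV iXE iYV iYE g' /\ q = mY X Y Z iXV iXE iYV iYE q' /\ corner Y f k g' q'.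
Proof.
  apply (corner_map Y _ (mY X Y Z iXV iXE iYV iYE)); [intros [e b]; reflexivity | reflexivity].
Qed.

Lemma wlen_mapX (X Y Z : PE2) iXV iXE iYV iYE cs :
  wlen (glue X Y Z iXV iXE iYV iYE) (map (injX X Y) cs) = wlen X cs.
Proof. induction cs as [|c cs IH]; [reflexivity|]. simpl map. rewrite !wlen_cons, IH. reflexivity. Qed.

Lemma wlen_mapY (X Y Z : PE2) iXV iXE iYV iYE cs :
  wlen (glue X Y Z iXV iXE iYV iYE) (map (injY X Y) cs) = wlen Y cs.
Proof. induction cs as [|c cs IH]; [reflexivity|]. simpl map. rewrite !wlen_cons, IH. reflexivity. Qed.

Lemma liftX (X Y Z : PE2) iXV iXE iYV iYE v a b cs vs :
  lwalk (glue X Y Z iXV iXE iYV iYE) v a b cs vs -> Forall (fun c => isX X Y c = true) cs ->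
  forall a', a = mX X Y Z iXV iXE iYV iYE a' ->
  exists b' cs' vs', b = mX X Y Z iXV iXE iYV iYE b' /\ lwalk X (estart X a') a' b' cs' vs' /\
    cs = map (injX X Y) cs' /\ vs = map (mX X Y Z iXV iXE iYV iYE) vs'.
Proof.
  induction 1 as [p Hp | p q r f k cs vs Hp Hc W IH]; intros F a' Ea.
  - exists a', nil, nil. subst; repeat split; auto. constructor; auto.
  - subst p. apply Forall_cons_iff in F; destruct F as [Hf F']. destruct f as [fx|fy]; [|discriminate Hf].
    assert (Hcor : exists q', q = mX X Y Z iXV iXE iYV iYE q' /\ (corner X fx k a' q' \/ corner X fx k q' a')).
    { destruct Hc as [Hc|Hc]; apply cornerX in Hc; destruct Hc as (g' & q' & E1 & E2 & Hc).
      - apply mX_inj in E1; subst. eauto.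
      - apply mX_inj in E2; subst. eauto. }
    destruct Hcor as (q' & Eq & Hc'). subst q.
    destruct (IH F' q' eq_refl) as (b' & cs' & vs' & Eb & W' & Ecs & Evs).
    assert (Est : estart X q' = estart X a').
    { apply lwalk_start in W. rewrite (proj1 (estX X Y Z iXV iXE iYV iYE q')) in W.
      rewrite (proj1 (estX X Y Z iXV iXE iYV iYE a')) in Hp. rewrite <- Hp in W. inversion W; auto. }
    rewrite Est in W'.
    exists b', ((fx, k) :: cs'), (a' :: vs'). split; auto. split.
    + econstructor; eauto.
    + simpl; subst; auto.
Qed.

Lemma liftY (X Y Z : PE2) iXV iXE iYV iYE v a b cs vs :
  subcomplex Z X iXV iXE -> subcomplex Z Y iYV iYE ->
  lwalk (glue X Y Z iXV iXE iYV iYE) v a b cs vs -> Forall (fun c => isX X Y c = false) cs ->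
  forall a', a = mY X Y Z iXV iXE iYV iYE a' ->
  exists b' cs' vs', b = mY X Y Z iXV iXE iYV iYE b' /\ lwalk Y (estart Y a') a' b' cs' vs' /\
    cs = map (injY X Y) cs' /\ vs = map (mY X Y Z iXV iXE iYV iYE) vs'.
Proof.
  intros HX HY.
  induction 1 as [p Hp | p q r f k cs vs Hp Hc W IH]; intros F a' Ea.
  - exists a', nil, nil. subst; repeat split; auto. constructor; auto.
  - subst p. apply Forall_cons_iff in F; destruct F as [Hf F']. destruct f as [fx|fy]; [discriminate Hf|].
    assert (Hcor : exists q', q = mY X Y Z iXV iXE iYV iYE q' /\ (corner Y fy k a' q' \/ corner Y fy k q' a')).
    { destruct Hc as [Hc|Hc]; apply cornerY in Hc; destruct Hc as (g' & q' & E1 & E2 & Hc).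
      - apply mY_inj in E1; auto; subst. eauto.
      - apply mY_inj in E2; auto; subst. eauto. }
    destruct Hcor as (q' & Eq & Hc'). subst q.
    destruct (IH F' q' eq_refl) as (b' & cs' & vs' & Eb & W' & Ecs & Evs).
    assert (Est : estart Y q' = estart Y a').
    { apply lwalk_start in W. rewrite (proj1 (estY X Y Z iXV iXE iYV iYE q' HX HY)) in W.
      rewrite (proj1 (estY X Y Z iXV iXE iYV iYE a' HX HY)) in Hp. rewrite <- Hp in W.
      apply (gV_inj X Y Z iXV iXE iYV); auto. }
    rewrite Est in W'.
    exists b', ((fy, k) :: cs'), (a' :: vs'). split; auto. split.
    + econstructor; eauto.
    + simpl; subst; auto.
Qed.

Lemma endsX (X Y Z : PE2) iXV iXE iYV iYE c g :
  ends (glue X Y Z iXV iXE iYV iYE) c g -> isX X Y c = true ->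
  exists g', g = mX X Y Z iXV iXE iYV iYE g'.
Proof.
  destruct c as [[f|f] k]; simpl; intros (h & Hc) E; [|discriminate].
  destruct Hc as [Hc|Hc]; apply cornerX in Hc; destruct Hc as (g' & q' & E1 & E2 & _); eauto.
Qed.

Lemma endsY (X Y Z : PE2) iXV iXE iYV iYE c g :
  ends (glue X Y Z iXV iXE iYV iYE) c g -> isX X Y c = false ->
  exists g', g = mY X Y Z iXV iXE iYV iYE g'.
Proof.
  destruct c as [[f|f] k]; simpl; intros (h & Hc) E; [discriminate|].
  destruct Hc as [Hc|Hc]; apply cornerY in Hc; destruct Hc as (g' & q' & E1 & E2 & _); eauto.
Qed.

Lemma zgerm (X Y Z : PE2) iXV iXE iYV iYE a b :
  mX X Y Z iXV iXE iYV iYE a = mY X Y Z iXV iXE iYV iYE b ->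
  exists z bb, a = (iXE z, bb) /\ b = (iYE z, bb).
Proof.
  destruct a as [ea ba], b as [eb bb]; unfold mX, mY; simpl. intro E. injection E as E1 E2.
  subst. revert E1. unfold gE. destruct (excluded_middle_informative _) as [H|H].
  - destruct (constructive_indefinite_description _ H) as [z Hz]; simpl. intro E; inversion E; subst. eauto.
  - discriminate.
Qed.

Lemma estZ (Z X : PE2) iV iE p : subcomplex Z X iV iE -> estart X (mapE Z X iE p) = iV (estart Z p).
Proof. intros (_ & _ & Hs & Ht & _). destruct p as [e []]; unfold estart, mapE; simpl; auto. Qed.

Theorem lemma7p9 (X Y Z : PE2)
  (iXV : vert Z -> vert X) (iXE : edge Z -> edge X)
  (iYV : vert Z -> vert Y) (iYE : edge Z -> edge Y) :
  PE_dim2 X -> PE_dim2 Y -> PE_dim1 Z ->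
  npc X -> npc Y ->
  subcomplex Z X iXV iXE -> subcomplex Z Y iYV iYE ->
  (ultra_convex Z X iXV iXE \/ ultra_convex Z Y iYV iYE) ->
  PE_dim2 (glue X Y Z iXV iXE iYV iYE) /\ npc (glue X Y Z iXV iXE iYV iYE).
Proof.
  intros [PEX FX] [PEY FY] _ NX NY HX HY UC.
  pose proof (glue_PE X Y Z iXV iXE iYV iYE HX HY PEX PEY) as PEG.
  split. { split; auto. destruct FX as [f]. constructor. exact (inl f). }
  intros v p cs vs W Hne NDcs NDvs.
  destruct (all_or_ex (isX X Y) cs) as [AllX | (c1 & Hc1 & Pc1)].
  - destruct cs as [|c cs0]; [congruence|].
    pose proof (walk_head _ _ _ _ _ _ _ W) as Hend.
    destruct (endsX X Y Z iXV iXE iYV iYE c p Hend) as [p' Ep]; [inversion AllX; auto|].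
    destruct (liftX X Y Z iXV iXE iYV iYE _ _ _ _ _ W AllX p' Ep) as (b' & cs' & vs' & Eb & W' & Ecs & Evs).
    rewrite Ep in Eb. apply mX_inj in Eb. subst b'.
    rewrite Ecs, wlen_mapX. apply (NX _ _ _ _ W').
    + destruct cs'; simpl in Ecs; congruence.
    + rewrite Ecs in NDcs. eapply NoDup_map_inv; eauto.
    + rewrite Evs in NDvs. eapply NoDup_map_inv; eauto.
  - destruct (all_or_ex (fun c => negb (isX X Y c)) cs) as [AllY | (c2 & Hc2 & Pc2)].
    + assert (AllY' : Forall (fun c => isX X Y c = false) cs).
      { eapply Forall_impl; [|exact AllY]. intros x Hx; simpl in Hx. apply Bool.negb_true_iff; auto. }
      destruct cs as [|c cs0]; [congruence|].
      pose proof (walk_head _ _ _ _ _ _ _ W) as Hend.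
      destruct (endsY X Y Z iXV iXE iYV iYE c p Hend) as [p' Ep]; [inversion AllY'; auto|].
      destruct (liftY X Y Z iXV iXE iYV iYE _ _ _ _ _ HX HY W AllY' p' Ep) as (b' & cs' & vs' & Eb & W' & Ecs & Evs).
      rewrite Ep in Eb. apply mY_inj in Eb; auto. subst b'.
      rewrite Ecs, wlen_mapY. apply (NY _ _ _ _ W').
      * destruct cs'; simpl in Ecs; congruence.
      * rewrite Ecs in NDcs. eapply NoDup_map_inv; eauto.
      * rewrite Evs in NDvs. eapply NoDup_map_inv; eauto.
    + apply Bool.negb_false_iff in Pc2.
      destruct UC as [UX|UY].
      * destruct (mixed (glue X Y Z iXV iXE iYV iYE) (isX X Y) _ _ _ _ W NDvs) as
          (p0 & q & xs & rest & vs1 & vs2 & Ew & Wx & Wr & Hpq & Fx &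
           d1 & d2 & d3 & d4 & P1 & P2 & P3 & P4 & E1 & E2 & E3 & E4); eauto.
        destruct (endsX X Y Z iXV iXE iYV iYE _ _ E1 P1) as [a1 A1].
        destruct (endsY X Y Z iXV iXE iYV iYE _ _ E2 P2) as [a2 A2].
        destruct (endsX X Y Z iXV iXE iYV iYE _ _ E3 P3) as [a3 A3].
        destruct (endsY X Y Z iXV iXE iYV iYE _ _ E4 P4) as [a4 A4].
        rewrite A1 in A2. apply zgerm in A2. destruct A2 as (zp & bp & Ea1 & _).
        rewrite A3 in A4. apply zgerm in A4. destruct A4 as (zq & bq & Ea3 & _).
        subst a1 a3.
        destruct (liftX X Y Z iXV iXE iYV iYE _ _ _ _ _ Wx Fx _ A1) as (b' & xs' & vs' & Eb & W' & Ecs & Evs).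
        rewrite A3 in Eb. apply mX_inj in Eb. subst b'.
        rewrite Ew, Ecs, wlen_mapX.
        pose proof (walk_nonneg _ _ _ _ _ _ PEG Wr).
        assert (2 * PI <= wlen X xs'); [|lra].
        pose proof (lwalk_end _ _ _ _ _ _ W') as Hend.
        change (iXE zq, bq) with (mapE Z X iXE (zq, bq)) in W', Hend.
        change (iXE zp, bp) with (mapE Z X iXE (zp, bp)) in W', Hend.
        rewrite !(estZ Z X iXV iXE) in W', Hend by auto.
        apply (UX (estart Z (zp, bp)) (zp, bp) (zq, bq) eq_refl) with (vs := vs'); auto.
        -- apply (proj1 HX). rewrite Hend. apply estZ; auto.
        -- intro E. apply Hpq. rewrite A1, A3. inversion E; subst; reflexivity.
      * destruct (mixed (glue X Y Z iXV iXE iYV iYE) (fun c => negb (isX X Y c)) _ _ _ _ W NDvs) as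
          (p0 & q & xs & rest & vs1 & vs2 & Ew & Wx & Wr & Hpq & Fx &
           d1 & d2 & d3 & d4 & P1 & P2 & P3 & P4 & E1 & E2 & E3 & E4).
        { exists c1; split; auto. rewrite Pc1; auto. }
        { exists c2; split; auto. rewrite Pc2; auto. }
        apply Bool.negb_true_iff in P1. apply Bool.negb_true_iff in P3.
        apply Bool.negb_false_iff in P2. apply Bool.negb_false_iff in P4.
        assert (Fx' : Forall (fun c => isX X Y c = false) xs).
        { eapply Forall_impl; [|exact Fx]. intros x Hx; simpl in Hx. apply Bool.negb_true_iff; auto. }
        destruct (endsY X Y Z iXV iXE iYV iYE _ _ E1 P1) as [a1 A1].
        destruct (endsX X Y Z iXV iXE iYV iYE _ _ E2 P2) as [a2 A2].
        destruct (endsY X Y Z iXV iXE iYV iYE _ _ E3 P3) as [a3 A3].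
        destruct (endsX X Y Z iXV iXE iYV iYE _ _ E4 P4) as [a4 A4].
        rewrite A1 in A2. symmetry in A2. apply zgerm in A2. destruct A2 as (zp & bp & _ & Ea1).
        rewrite A3 in A4. symmetry in A4. apply zgerm in A4. destruct A4 as (zq & bq & _ & Ea3).
        subst a1 a3.
        destruct (liftY X Y Z iXV iXE iYV iYE _ _ _ _ _ HX HY Wx Fx' _ A1) as (b' & xs' & vs' & Eb & W' & Ecs & Evs).
        rewrite A3 in Eb. apply mY_inj in Eb; auto. subst b'.
        rewrite Ew, Ecs, wlen_mapY.
        pose proof (walk_nonneg _ _ _ _ _ _ PEG Wr).
        assert (2 * PI <= wlen Y xs'); [|lra].
        pose proof (lwalk_end _ _ _ _ _ _ W') as Hend.
        change (iYE zq, bq) with (mapE Z Y iYE (zq, bq)) in W', Hend.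
        change (iYE zp, bp) with (mapE Z Y iYE (zp, bp)) in W', Hend.
        rewrite !(estZ Z Y iYV iYE) in W', Hend by auto.
        apply (UY (estart Z (zp, bp)) (zp, bp) (zq, bq) eq_refl) with (vs := vs'); auto.
        -- apply (proj1 HY). rewrite Hend. apply estZ; auto.
        -- intro E. apply Hpq. rewrite A1, A3. inversion E; subst; reflexivity.
Qed.
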